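(* Let $R=K[x_1,\ldots,x_n,x_{n+1}]$ over a field $K$, let $I\subset R$ be a monomial ideal with $\gcd(u,x_{n+1})=1$ for all $u\in\mathcal{G}(I)$, let $\mathfrak{m}=(x_1,\ldots,x_{n+1})$ and $\mathfrak{q}=(x_1,\ldots,x_n)$, assume $I\neq\mathfrak{q}$, and set $L:=I+x_{n+1}\mathfrak{q}$. Suppose that $(I^t:v)=\mathfrak{q}$ for some $t\geq1$ and some monomial $v\in R$, and that there is $\lambda\in\{1,\ldots,n\}$ such that whenever $x_\lambda v=f_1\cdots f_tM$ with $f_1,\ldots,f_t\in\mathcal{G}(I)$ and $M$ a monomial of $R$, there is an index $j$ with $x_\lambda\mid Mf_j$ and $Mf_j/x_\lambda\neq1$. Then $\mathfrak{m}\in\mathrm{Ass}(R/L^t)$.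
   Context: $\mathcal{G}(I)$ denotes the unique minimal set of monomial generators of a monomial ideal $I$. *)

(* Defs.v *)
From mathcomp Require Import all_boot all_order all_algebra.
From mathcomp Require Import mpoly.
Set Implicit Arguments. Unset Strict Implicit. Unset Printing Implicit Defensive.
Import GRing.Theory.
Local Open Scope ring_scope.

Section Ideals.
Variables (K : fieldType) (k : nat).
Local Notation R := {mpoly K[k]}.

Definition is_ideal (J : R -> Prop) : Prop :=
  [/\ J 0, (forall a b, J a -> J b -> J (a + b)) & (forall r a, J a -> J (r * a))].

Definition ideal_gen (S : R -> Prop) : R -> Prop :=
  fun f => forall J, is_ideal J -> (forall g, S g -> J g) -> J f.

Definition ideal_eq (I J : R -> Prop) : Prop := forall f, I f <-> J f.

Definition ideal_sum (I J : R -> Prop) : R -> Prop :=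
  ideal_gen (fun g => I g \/ J g).

Definition ideal_mul (I J : R -> Prop) : R -> Prop :=
  ideal_gen (fun g => exists a b, [/\ I a, J b & g = a * b]).

Fixpoint ideal_pow (I : R -> Prop) (t : nat) : R -> Prop :=
  if t is t'.+1 then ideal_mul (ideal_pow I t') I else (fun _ => True).

Definition ideal_colon (I : R -> Prop) (f : R) : R -> Prop := fun g => I (g * f).

(* monomials are identified with their exponent vectors m : 'X_{1..k},
   the monomial itself being the polynomial 'X_[m] *)
Definition monomial_ideal (I : R -> Prop) : Prop :=
  exists A : 'X_{1..k} -> Prop,
    ideal_eq I (ideal_gen (fun g => exists2 m, A m & g = 'X_[m])).

(* G(I): the minimal monomial generators = monomials of I minimal for divisibility
   among the monomials of I *)
Definition mingens (I : R -> Prop) (u : 'X_{1..k}) : Prop :=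
  I 'X_[u] /\ forall w : 'X_{1..k}, I 'X_[w] -> (w <= u)%MM -> w = u.

(* P in Ass(R/J): P is the annihilator of some element (class of f) of R/J *)
Definition is_ass (J : R -> Prop) (P : R -> Prop) : Prop :=
  exists f : R, ideal_eq P (ideal_colon J f).

End Ideals.

(* Main.v *)
Require Import Defs.
From mathcomp Require Import all_boot all_order all_algebra.
From mathcomp Require Import mpoly.
From mathcomp Require Import zify.
From Stdlib Require Import Classical.
Import GRing.Theory.
Local Open Scope ring_scope.

Section Gen.
Context {K : fieldType} {k : nat}.
Local Notation R := {mpoly K[k]}.
Local Notation mon := 'X_{1..k}.

Definition mgen (S : mon -> Prop) : R -> Prop :=
  ideal_gen (fun g => exists2 m, S m & g = 'X_[m]).

Lemma gen_ideal (S : R -> Prop) : is_ideal (ideal_gen S).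
Proof.
split.
- by move=> J [J0 _ _] _.
- by move=> a b Ha Hb J HJ HS; case: (HJ) => _ JD _; apply: JD; [apply: Ha | apply: Hb].
- by move=> r a Ha J HJ HS; case: (HJ) => _ _ JM; apply: JM; apply: Ha.
Qed.

Lemma gen_min (S J : R -> Prop) (f : R) : is_ideal J -> (forall g, S g -> J g) ->
  ideal_gen S f -> J f.
Proof. by move=> HJ HS Hf; apply: Hf. Qed.
Arguments gen_min {S J f}.

Lemma gen_sub (S : R -> Prop) g : S g -> ideal_gen S g.
Proof. by move=> Hg J _ HS; apply: HS. Qed.

Lemma gen_ext (S S' : R -> Prop) : (forall g, S g <-> S' g) ->
  ideal_eq (ideal_gen S) (ideal_gen S').
Proof.
move=> H f; split; apply: gen_min; try apply: gen_ideal;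
 by move=> g /H; apply: gen_sub.
Qed.

Lemma ideal_eq_ideal (J J' : R -> Prop) : ideal_eq J J' -> is_ideal J' -> is_ideal J.
Proof.
move=> E [h0 hD hM]; split.
- by apply/E.
- by move=> a b /E Ha /E Hb; apply/E; apply: hD.
- by move=> r a /E Ha; apply/E; apply: hM.
Qed.

Lemma idealM (J : R -> Prop) r a : is_ideal J -> J a -> J (r * a).
Proof. by case=> _ _ H; apply: H. Qed.
Lemma idealMr (J : R -> Prop) r a : is_ideal J -> J a -> J (a * r).
Proof. by move=> HJ Ha; rewrite mulrC; apply: idealM. Qed.
Lemma idealD (J : R -> Prop) a b : is_ideal J -> J a -> J b -> J (a + b).
Proof. by case=> _ H _; apply: H. Qed.
Lemma ideal0 (J : R -> Prop) : is_ideal J -> J 0.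
Proof. by case. Qed.
Arguments idealM {J r a}. Arguments idealMr {J r a}. Arguments idealD {J a b}.
Arguments ideal0 {J}.

Lemma mgen_le (S : mon -> Prop) s m : S s -> (s <= m)%MM -> mgen S 'X_[m].
Proof.
move=> Ss le; rewrite -(submK le) mpolyXD.
apply: (idealM (gen_ideal _)).
by apply: gen_sub; exists s.
Qed.

Lemma mgen_supp (S : mon -> Prop) h : mgen S h ->
  forall m, m \in msupp h -> exists2 s, S s & (s <= m)%MM.
Proof.
apply: (gen_min (J := fun h => forall m, m \in msupp h -> exists2 s, S s & (s <= m)%MM)).
- split.
  + by move=> m; rewrite mcoeff_msupp mcoeff0 eqxx.
  + move=> a b Ha Hb m /msuppD_le; rewrite mem_cat => /orP[/Ha|/Hb] //.
  + move=> r a Ha m /msuppM_le /allpairsP [[m1 m2] /= [_ H2 ->]].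
    case: (Ha _ H2) => s Ss le; exists s => //.
    by apply: lepm_trans le _; rewrite addmC; apply: lem_addr.
- move=> g [m Sm ->] m'; rewrite msuppX mem_seq1 => /eqP ->.
  by exists m => //; apply: lepm_refl.
Qed.

Definition madd (S1 S2 : mon -> Prop) : mon -> Prop :=
  fun m => exists a b, [/\ S1 a, S2 b & m = (a + b)%MM].

Lemma mul_mgen (J1 J2 : R -> Prop) S1 S2 :
  ideal_eq J1 (mgen S1) -> ideal_eq J2 (mgen S2) ->
  ideal_eq (ideal_mul J1 J2) (mgen (madd S1 S2)).
Proof.
move=> E1 E2 f.
have HG := gen_ideal (fun g => exists2 m, madd S1 S2 m & g = 'X_[m]).
split.
- apply: gen_min; first exact: gen_ideal.
  move=> g [a [b [/E1 Ha /E2 Hb ->]]].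
  move: Ha; apply: (gen_min (J := fun a => mgen (madd S1 S2) (a * b))).
  + split; first by rewrite mul0r; apply: (ideal0 HG).
    * by move=> x y Hx Hy; rewrite mulrDl; apply: (idealD HG).
    * by move=> r x Hx; rewrite -mulrA; apply: (idealM HG).
  + move=> g' [s1 S1s ->]; move: Hb.
    apply: (gen_min (J := fun b => mgen (madd S1 S2) ('X_[s1] * b))).
    * split; first by rewrite mulr0; apply: (ideal0 HG).
      - by move=> x y Hx Hy; rewrite mulrDr; apply: (idealD HG).
      - by move=> r x Hx; rewrite mulrCA; apply: (idealM HG).
    * move=> g'' [s2 S2s ->]; rewrite -mpolyXD; apply: gen_sub.
      by exists (s1 + s2)%MM => //; exists s1, s2.
- apply: gen_min; first exact: gen_ideal.
  move=> g [m [a [b [Sa Sb ->]]] ->]; rewrite mpolyXD; apply: gen_sub.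
  exists 'X_[a], 'X_[b]; split => //.
  + by apply/E1; apply: gen_sub; exists a.
  + by apply/E2; apply: gen_sub; exists b.
Qed.

Lemma sum_mgen (J1 J2 : R -> Prop) S1 S2 :
  ideal_eq J1 (mgen S1) -> ideal_eq J2 (mgen S2) ->
  ideal_eq (ideal_sum J1 J2) (mgen (fun m => S1 m \/ S2 m)).
Proof.
move=> E1 E2 f; split.
- apply: gen_min; first exact: gen_ideal.
  move=> g [/E1|/E2]; apply: gen_min; try exact: gen_ideal;
    move=> g' [m Sm ->]; apply: gen_sub; exists m => //; by [left|right].
- apply: gen_min; first exact: gen_ideal.
  move=> g [m [Sm|Sm] ->]; apply: gen_sub; [left; apply/E1|right; apply/E2];
   by apply: gen_sub; exists m.
Qed.

Fixpoint mpow (S : mon -> Prop) (t : nat) : mon -> Prop :=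
  if t is t'.+1 then madd (mpow S t') S else (fun m => m = 0%MM).

Lemma pow_mgen (J : R -> Prop) S t : ideal_eq J (mgen S) ->
  ideal_eq (ideal_pow J t) (mgen (mpow S t)).
Proof.
move=> E; elim: t => [|t IH] /=.
- move=> f; split => // _; rewrite -[f]mulr1 -mpolyX0.
  apply: (idealM (gen_ideal _)).
  by apply: gen_sub; exists 0%MM.
- exact: mul_mgen.
Qed.


Lemma mdeg_lt (w m : mon) : (w <= m)%MM -> w != m -> (mdeg w < mdeg m)%N.
Proof.
move=> le ne; rewrite -(submK le) mdegD -{1}[mdeg w]add0n ltn_add2r lt0n mdeg_eq0.
apply: contra ne => /eqP E; by rewrite -(submK le) E add0m.
Qed.

Lemma mingens_ex (I : R -> Prop) m : I 'X_[m] -> exists2 u, mingens I u & (u <= m)%MM.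
Proof.
suff H : forall d m, (mdeg m < d)%N -> I 'X_[m] -> exists2 u, mingens I u & (u <= m)%MM.
  by apply: (H (mdeg m).+1).
elim=> [//|d IH] {}m Hd Hm.
case: (classic (mingens I m)) => [Hmin|Hn]; first by exists m => //; apply: lepm_refl.
have H1: ~ (forall w : mon, I 'X_[w] -> (w <= m)%MM -> w = m) by move=> H; apply: Hn; split.
have [w Hw] := not_all_ex_not _ (fun w : mon => I 'X_[w] -> (w <= m)%MM -> w = m) H1.
have [Iw H2] := imply_to_and _ _ Hw.
have [le ne] := imply_to_and _ _ H2.
have ltd : (mdeg w < mdeg m)%N by apply: mdeg_lt => //; apply/eqP.
have [|u Hu le'] := IH w _ Iw; first by apply: leq_trans ltd _.
by exists u => //; apply: lepm_trans le.
Qed.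

End Gen.
Arguments gen_min {K k S J f}.
Arguments idealM {K k J r a}. Arguments idealMr {K k J r a}. Arguments idealD {K k J a b}.
Arguments ideal0 {K k J}.

Lemma ord_lt_max n (i : 'I_n.+1) : i != ord_max -> (i < n)%N.
Proof.
move=> H; have := ltn_ord i; rewrite ltnS leq_eqVlt => /orP[/eqP E|//].
by case/eqP: H; apply: val_inj.
Qed.

Lemma lt_ord_max n (i : 'I_n.+1) : (i < n)%N -> i != ord_max.
Proof. by move=> Hi; apply/eqP => E; rewrite E /= ltnn in Hi. Qed.
Theorem proposition3p2 (K : fieldType) (n : nat) (I : {mpoly K[n.+1]} -> Prop)
  (t : nat) (v : 'X_{1..n.+1}) (lam : 'I_n.+1) :
  let mm := ideal_gen (fun g : {mpoly K[n.+1]} => exists i : 'I_n.+1, g = 'X_i) in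
  let q := ideal_gen (fun g : {mpoly K[n.+1]} =>
             exists2 i : 'I_n.+1, (i < n)%N & g = 'X_i) in
  let L := ideal_sum I
             (ideal_mul (ideal_gen (fun g => g = 'X_(@ord_max n))) q) in
  monomial_ideal I ->
  (forall u, mingens I u -> u (@ord_max n) = 0%N) ->
  ~ ideal_eq I q ->
  (1 <= t)%N ->
  ideal_eq (ideal_colon (ideal_pow I t) 'X_[v]) q ->
  (lam < n)%N ->
  (forall (f : 'I_t -> 'X_{1..n.+1}) (M : 'X_{1..n.+1}),
      (forall j, mingens I (f j)) ->
      (U_(lam) + v)%MM = (\big[mnm_add/0%MM]_(j < t) f j + M)%MM ->
      exists j : 'I_t, (U_(lam) <= M + f j)%MM /\ (M + f j)%MM <> U_(lam)%MM) ->
  is_ass (ideal_pow L t) mm.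
Proof.
move=> mm q L [A HA] HG0 HIq Ht Hcol Hlam _.
set mx := @ord_max n.
set G := mingens I.
have HIid : is_ideal I := ideal_eq_ideal _ _ HA (gen_ideal _).
have HIG : ideal_eq I (mgen G).
  move=> f; split.
  - move/HA; apply: gen_min; first exact: gen_ideal.
    move=> g [a Aa ->].
    have : I 'X_[a] by apply/HA; apply: gen_sub; exists a.
    by case/mingens_ex => u Gu le; apply: mgen_le Gu le.
  - by apply: gen_min => // g [u [Iu _] ->].
set Uq := fun m : 'X_{1..n.+1} => exists2 i : 'I_n.+1, (i < n)%N & m = U_(i)%MM.
have Hq : ideal_eq q (mgen Uq).
  apply: gen_ext => g; split => [[i Hi ->]|[m [i Hi ->] ->]].
  + by exists U_(i)%MM => //; exists i.
  + by exists i.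
have Hmm : ideal_eq mm (mgen (fun m : 'X_{1..n.+1} => exists i, m = U_(i)%MM)).
  apply: gen_ext => g; split => [[i ->]|[m [i ->] ->]].
  + by exists U_(i)%MM => //; exists i.
  + by exists i.
have Hx : ideal_eq (ideal_gen (fun g : {mpoly K[n.+1]} => g = 'X_mx)) (mgen (fun m : 'X_{1..n.+1} => m = U_(mx)%MM)).
  apply: gen_ext => g; split => [->|[m -> ->]] //.
  by exists U_(mx)%MM.
set GT := fun m => G m \/ madd (fun m => m = U_(mx)%MM) Uq m.
have HL : ideal_eq L (mgen GT) := sum_mgen _ _ _ _ HIG (mul_mgen _ _ _ _ Hx Hq).
have HIt := pow_mgen _ _ t HIG.
have HLt := pow_mgen _ _ t HL.
have F1 : forall t s, mpow G t s -> s mx = 0%N.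
  elim=> [s -> |t' IH s [a [b [Ha Gb ->]]]]; first by rewrite mnm0E.
  by rewrite mnmDE (IH _ Ha) (HG0 _ Gb).
have F2 : forall t s, mpow G t s -> mpow GT t s.
  elim=> [//|t' IH s [a [b [Ha Gb ->]]]].
  by exists a, b; split => //; [apply: IH | left].
have F3 : forall t s, mpow GT t s -> s mx = 0%N -> mpow G t s.
  elim=> [//|t' IH s [a [b [Ha [Gb|Tb] ->]]]]; rewrite mnmDE => H0.
  - by exists a, b; split => //; apply: IH => //; lia.
  - case: Tb => c [d [Ec _ Eb]]; move: H0; rewrite Eb Ec mnmDE mnm1E eqxx; lia.
have F4 : forall i0 t s, mpow G t.+1 s -> s i0 != 0%N ->
    exists a b, [/\ mpow G t a, G b, b i0 != 0%N & s = (a + b)%MM].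
  move=> i0; elim=> [|t' IH] s [a [b [Ha Gb ->]]]; rewrite mnmDE => H0.
  - by exists a, b; split => //; move: Ha H0 => /= ->; rewrite mnm0E.
  - case: (eqVneq (b i0) 0%N) => Hb; last by exists a, b.
    have [|a' [b' [Ha' Gb' Hb' ->]]] := IH a Ha; first by rewrite Hb addn0 in H0.
    exists (a' + b)%MM, b'; split => //; first by exists a', b.
    by rewrite -!addmA [(b' + b)%MM]addmC.
have q1 : ~ q 1.
  move/Hq; rewrite -mpolyX0 => /mgen_supp /(_ 0%MM).
  rewrite msuppX mem_seq1 eqxx => /(_ isT) [s [i Hi ->]].
  by rewrite lep1mP mnm0E.
have notPv : ~ (exists2 s, mpow G t s & (s <= v)%MM).
  case=> s Hs le; apply: q1; apply/Hcol; rewrite /ideal_colon mul1r.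
  by apply/HIt; apply: mgen_le Hs le.
have notG0 : ~ G 0%MM.
  move=> G0; apply: notPv; exists 0%MM; last by apply/mnm_lepP => j; rewrite mnm0E.
  elim: (t) => [//|t' IH]; by exists 0%MM, 0%MM; split => //; rewrite addm0.
have qid : is_ideal q := gen_ideal _.
have [i0 [Hi0 HnI0]] : exists i0 : 'I_n.+1, (i0 < n)%N /\ ~ I 'X_i0.
  apply: NNPP => Hno; apply: HIq => f; split.
  - move/HIG; apply: gen_min => // g [b Gb ->].
    case: (pickP (fun j => b j != 0%N)) => [j Hj|H0]; last first.
      exfalso; apply: notG0.
      have <- // : b = 0%MM.
      by apply/mnmP => j; rewrite mnm0E; move: (H0 j) => /= /negbFE/eqP.
    have Hjn : j != mx by apply: contraNneq Hj => ->; rewrite (HG0 _ Gb).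
    apply/Hq; apply: (mgen_le _ U_(j)%MM); first by exists j => //; apply: ord_lt_max.
    by rewrite lep1mP.
  - apply: gen_min => // g [i Hi ->]; apply: NNPP => HnI; apply: Hno; by exists i.
set v0 : 'X_{1..n.+1} := [multinom (if i == mx then 0%N else v i) | i < n.+1].
have v0E : forall j, v0 j = if j == mx then 0%N else v j by move=> j; rewrite mnmE.
have v0le : (v0 <= v)%MM by apply/mnm_lepP => j; rewrite v0E; case: ifP.
have i0mx : i0 != mx by apply: lt_ord_max.
have ClaimA : forall i : 'I_n.+1, (i < n)%N -> exists2 s, mpow G t s & (s <= U_(i) + v0)%MM.
  move=> i Hi; have : q 'X_i by apply: gen_sub; exists i.
  move/Hcol; rewrite /ideal_colon -mpolyXD => /HIt /mgen_supp /(_ (U_(i) + v)%MM).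
  rewrite msuppX mem_seq1 eqxx => /(_ isT) [s Hs le]; exists s => //.
  apply/mnm_lepP => j; move/mnm_lepP: le => /(_ j); rewrite !mnmDE v0E.
  by case: eqVneq => [->|_] //; rewrite (F1 _ _ Hs).
have ClaimB : exists2 s, mpow GT t s & (s <= U_(mx) + v0)%MM.
  have [s Hs le] := ClaimA i0 Hi0.
  have [t' Et] : exists t', t = t'.+1 by exists t.-1; lia.
  rewrite Et in Hs *.
  set c := (U_(i0) + v0 - s)%MM.
  have Hsc : (s + c)%MM = (U_(i0) + v0)%MM by rewrite addmC submK.
  have [a [b [Ha Gb Hbc Es]]] : exists a b,
      [/\ mpow G t' a, G b, (b + c)%MM i0 != 0%N & s = (a + b)%MM].
    case: (eqVneq (c i0) 0%N) => Hc.
    - have Hs0 : s i0 != 0%N.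
        by move: Hsc => /mnmP/(_ i0); rewrite !mnmDE mnm1E eqxx Hc; lia.
      have [a [b [Ha Gb Hb ->]]] := F4 i0 t' s Hs Hs0.
      by exists a, b; split => //; rewrite mnmDE; lia.
    - case: Hs => a [b [Ha Gb ->]]; exists a, b; split=> //; rewrite mnmDE; lia.
  set N := (b + c)%MM.
  have HaN : (a + N)%MM = (U_(i0) + v0)%MM by rewrite /N addmA -Es.
  have HbN : forall l, (b l <= N l)%N by move=> l; rewrite /N mnmDE; lia.
  move: Hbc; rewrite -/N => Hbc.
  clearbody N.
  case: (pickP (fun j => (j != mx) && ((N - U_(i0))%MM j != 0%N))) => [j /andP [Hjm Hj] | Hno].
  - exists (a + (U_(mx) + U_(j)))%MM.
    + exists a, (U_(mx) + U_(j))%MM; split => //; first by apply: F2.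
      right; exists U_(mx)%MM, U_(j)%MM; split => //; exists j => //; exact: ord_lt_max.
    + apply/mnm_lepP => l; move: HaN => /mnmP/(_ l); move: Hj Hbc.
      rewrite !mnmDE !mnmBE !mnm1E.
      case: (eqVneq j l) => [<-|Hjl]; first by rewrite /=; lia.
      by case: (eqVneq i0 l) => [<-|Hil]; rewrite /=; lia.
  - have bl : forall l, (b l <= (i0 == l))%N.
      move=> l; have := Hno l; have := HbN l; move: HaN => /mnmP/(_ l); rewrite /= !mnmDE !mnmBE !mnm1E v0E.
      case: (eqVneq l mx) => [->|Hl]; first by rewrite (negbTE i0mx); lia.
      by rewrite /=; lia.
    exfalso; case: (eqVneq (b i0) 0%N) => Hb0.
    + apply: notG0; suff <- : b = 0%MM by [].
      apply/mnmP => l; rewrite mnm0E; have := bl l; case: eqVneq => [<-|_]; lia.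
    + apply: HnI0; suff <- : b = U_(i0)%MM by case: Gb.
      apply/mnmP => l; rewrite mnm1E; have := bl l; case: eqVneq => [<-|_]; lia.
have LTid : is_ideal (ideal_pow L t) := ideal_eq_ideal _ _ HLt (gen_ideal _).
have mmid : is_ideal mm := gen_ideal _.
exists 'X_[v0] => g; split.
- set C := fun g => ideal_pow L t (g * 'X_[v0]).
  have Cid : is_ideal C.
    split; rewrite /C.
    + by rewrite mul0r; apply: ideal0.
    + by move=> x y Hx1 Hy1; rewrite mulrDl; apply: idealD.
    + by move=> r x Hx1; rewrite -mulrA; apply: idealM.
  apply: (gen_min (J := C)) => // h [i ->]; rewrite /C -mpolyXD; apply/HLt.
  case: (eqVneq i mx) => [->|Him].
  + by case: ClaimB => s Hs le; apply: mgen_le Hs le.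
  + have [s Hs le] := ClaimA i (ord_lt_max _ _ Him).
    by apply: mgen_le (F2 _ _ Hs) le.
- move=> H; apply: NNPP => Hng.
  have c0 : g@_0%MM != 0.
    apply/negP => /eqP c0; apply: Hng; rewrite (mpolyE g).
    have : forall r : seq 'X_{1..n.+1}, all (fun m => m \in msupp g) r ->
        mm (\sum_(m <- r) g@_m *: 'X_[m]).
      elim => [|m r IH] /=; first by rewrite big_nil; case: mmid.
      move=> /andP[Hm Hr]; rewrite big_cons; apply: (idealD mmid); last by apply: IH.
      rewrite -mul_mpolyC; apply: (idealM mmid); apply/Hmm.
      case: (pickP (fun j => m j != 0%N)) => [j Hj|H0]; last first.
        have Em : m = 0%MM by apply/mnmP => j; rewrite mnm0E; move: (H0 j) => /= /negbFE/eqP.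
        by move: Hm; rewrite Em mcoeff_msupp c0 eqxx.
      by apply: (mgen_le _ U_(j)%MM); [exists j | rewrite lep1mP].
    by apply; apply/allP.
  have : v0 \in msupp (g * 'X_[v0]).
    by rewrite mcoeff_msupp -[X in _@_X]addm0 mcoeffMX.
  move/HLt: H => /mgen_supp H /H [s Hs le].
  apply: notPv; exists s; last by apply: lepm_trans le v0le.
  apply: F3 => //; move/mnm_lepP: le => /(_ mx); rewrite v0E eqxx; lia.
Qed.
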